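(* For any $1\le\beta\le m$ and any $x\in\mathbb{R}^n$, $\mathbb{E}_{\mathbb{S}}[a_{i^*}a_{i^*}^T]\preceq\frac{\beta}{m}A^TA$ (in the positive semidefinite order).
   Context: $A\in\mathbb{R}^{m\times n}$ has rows $a_1^T,\dots,a_m^T$ with $\|a_i\|_2=1$, and $b\in\mathbb{R}^m$; $t^+=\max\{t,0\}$. Sampling distribution $\mathbb{S}$ at $x$ (with sample size $\beta$): choose $\tau\subseteq\{1,\dots,m\}$ with $|\tau|=\beta$ uniformly at random among all $\binom m\beta$ subsets and let $i^*\in\tau$ be an index maximizing $(a_i^Tx-b_i)^+$ over $i\in\tau$; $\mathbb{E}_{\mathbb{S}}$ is expectation over $\tau$. *)

(* Defs.v *)
From mathcomp Require Import all_boot all_order all_algebra.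
Set Implicit Arguments. Unset Strict Implicit. Unset Printing Implicit Defensive.
Import Order.TTheory GRing.Theory Num.Theory.
Local Open Scope ring_scope.

Section Defs.
Variables (R : realFieldType) (m n : nat).

Definition pos_part (t : R) : R := Num.max t 0.

Definition residual (A : 'M[R]_(m, n)) (b : 'cV[R]_m) (x : 'cV[R]_n) (i : 'I_m) : R :=
  pos_part ((A *m x) i 0 - b i 0).

(* sel picks, for every beta-subset tau, an index i* in tau maximizing the residual
   over tau (any tie-breaking rule is allowed) *)
Definition greedy_selection (A : 'M[R]_(m, n)) (b : 'cV[R]_m) (x : 'cV[R]_n)
  (beta : nat) (sel : {set 'I_m} -> 'I_m) : Prop :=
  forall tau : {set 'I_m}, #|tau| = beta ->
    sel tau \in tau /\ (forall j, j \in tau -> residual A b x j <= residual A b x (sel tau)).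

(* E_S[a_{i*} a_{i*}^T], tau uniform over all binom(m,beta) subsets of size beta *)
Definition ES_outer (A : 'M[R]_(m, n)) (beta : nat) (sel : {set 'I_m} -> 'I_m) : 'M[R]_n :=
  ('C(m, beta))%:R^-1 *:
    \sum_(tau : {set 'I_m} | #|tau| == beta) ((row (sel tau) A)^T *m row (sel tau) A).

End Defs.

Definition loewner_le (R : realFieldType) (k : nat) (B C : 'M[R]_k) : Prop :=
  forall v : 'cV[R]_k, 0 <= (v^T *m (C - B) *m v) 0 0.

(* Main.v *)
Require Import Defs.
From mathcomp Require Import all_boot all_order all_algebra.
From mathcomp Require Import zify ring.
Import Order.TTheory GRing.Theory Num.Theory.
Local Open Scope ring_scope.

Lemma quad_gram (R : realFieldType) (k n : nat) (M : 'M[R]_(k, n)) (v : 'cV[R]_n) :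
  (v^T *m (M^T *m M) *m v) 0 0 = \sum_(j < k) ((M *m v) j 0) ^+ 2.
Proof.
rewrite mulmxA -trmx_mul -mulmxA mxE; apply: eq_bigr => j _.
by rewrite mxE expr2.
Qed.

Lemma count_contain (m beta : nat) (i : 'I_m) : (1 <= beta)%N ->
  #|[set tau : {set 'I_m} | #|tau| == beta] :&: [set tau : {set 'I_m} | i \in tau]| = 'C(m.-1, beta.-1).
Proof.
move=> hb.
have H := cardsID [set tau : {set 'I_m} | i \in tau] [set tau : {set 'I_m} | #|tau| == beta].
have E : [set tau : {set 'I_m} | #|tau| == beta] :\: [set tau : {set 'I_m} | i \in tau]
   = [set tau : {set 'I_m} | tau \subset [set~ i] & #|tau| == beta].
  apply/setP => t; rewrite !inE subsetC sub1set inE andbC.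
  by [].
rewrite E cards_draws card_draws cardsC1 card_ord in H.
have m0 : (0 < m)%N by apply: leq_ltn_trans (ltn_ord i).
have P : 'C(m, beta) = ('C(m.-1, beta) + 'C(m.-1, beta.-1))%N.
  by case: (m) m0 => [//|m'] _; case: (beta) hb => [//|b'] _; rewrite binS.
rewrite P in H; lia.
Qed.

Theorem lemma5 (R : realFieldType) (m n : nat) (A : 'M[R]_(m, n)) (b : 'cV[R]_m)
  (beta : nat) (x : 'cV[R]_n) (sel : {set 'I_m} -> 'I_m) :
  (forall i : 'I_m, \sum_(j < n) A i j ^+ 2 = 1) ->
  (1 <= beta <= m)%N ->
  greedy_selection A b x beta sel ->
  loewner_le (ES_outer A beta sel) ((beta%:R / m%:R) *: (A^T *m A)).
Proof.
move=> _ /andP[hb hbm] Hg v.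
set f := fun i : 'I_m => ((A *m v) i 0) ^+ 2.
have f0 : forall i, 0 <= f i by move=> i; rewrite /f sqr_ge0.
set N := 'C(m.-1, beta.-1).
have key : \sum_(tau : {set 'I_m} | #|tau| == beta) f (sel tau)
           <= \sum_i f i *+ N.
  apply: (@le_trans _ _ (\sum_(tau : {set 'I_m} | #|tau| == beta) \sum_(i in tau) f i)).
    apply: ler_sum => tau /eqP Ht.
    have [Hin _] := Hg tau Ht.
    rewrite (bigD1 (sel tau)) //= lerDl; exact: sumr_ge0.
  under eq_bigr do rewrite big_mkcond.
  rewrite exchange_big /=; apply: ler_sum => i _.
  rewrite -big_mkcondr sumr_const.
  rewrite le_eqVlt; apply/orP; left; apply/eqP; congr (_ *+ _).
  by rewrite /N -(@count_contain m beta i hb); apply/eq_card => t; rewrite !inE.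
have E1 : (v^T *m ((beta%:R / m%:R) *: (A^T *m A)) *m v) 0 0
          = (beta%:R / m%:R) * \sum_i f i.
  by rewrite -scalemxAr -scalemxAl mxE quad_gram.
have E2 : (v^T *m ES_outer A beta sel *m v) 0 0
          = ('C(m, beta))%:R^-1 * \sum_(tau : {set 'I_m} | #|tau| == beta) f (sel tau).
  rewrite /ES_outer -scalemxAr -scalemxAl mxE mulmx_sumr mulmx_suml summxE.
  congr (_ * _); apply: eq_bigr => tau _.
  by rewrite quad_gram big_ord1 -row_mul mxE.
have E : forall X Y : 'M[R]_1, (X - Y) 0 0 = X 0 0 - Y 0 0 by move=> X Y; rewrite !mxE.
rewrite mulmxBr mulmxBl E E1 E2 subr_ge0.
have Cpos : (0 < 'C(m, beta))%N by rewrite bin_gt0.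
have mpos : (0 < m)%N by apply: leq_trans hbm.
apply: (le_trans (ler_wpM2l _ key)); first by rewrite invr_ge0 ler0n.
have Hn : (m * N = beta * 'C(m, beta))%N.
  by rewrite /N mul_bin_diag prednK.
have HnR : (m%:R * N%:R = beta%:R * ('C(m, beta))%:R :> R) by rewrite -!natrM Hn.
rewrite sumrMnl -[(\sum_i f i) *+ N]mulr_natr le_eqVlt; apply/orP; left; apply/eqP.
rewrite [(\sum_i f i) * _]mulrC mulrA; congr (_ * _).
have C0 : ('C(m, beta))%:R != 0 :> R by rewrite pnatr_eq0 -lt0n.
have m0 : m%:R != 0 :> R by rewrite pnatr_eq0 -lt0n.
have -> : N%:R = beta%:R * ('C(m, beta))%:R / m%:R :> R.
  by rewrite -HnR mulrAC mulfV ?mul1r.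
by field; apply/andP.
Qed.
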